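(* If $k \geq 9$ then the sets $\pi_{q_k}(S_{k-1}) + 1$ and $g_{q_k,k}(\pi_{q_k}(A_{q_k}))$ are $q_k^{-2k-4}$-strongly interleaved.
   Context: $q_k$ is the unique root in $(1,2)$ of $x^k - x^{k-1} - \cdots - x - 1 = 0$; note $\sum_{j=1}^k q_k^{-j} = 1$. $\pi_q((\epsilon_j)_{j\ge1}) = \sum_{j\ge1}\epsilon_j q^{-j}$. $S_{k-1}$ is the set of $(\epsilon_j) \in \{0,1\}^\mathbb{N}$ containing no block of consecutive entries equal to $01^{k-1}$ or $10^{k-1}$ (words concatenated, $a^n$ = $n$ repetitions). $g_{q,k}(x) = q^{-k}x + \sum_{j=1}^{k-1}q^{-j}$. The set $A_{q_k}$: let $(c_j)_{j\ge1} = 1^k0^\infty$; let $J = \{j : c_j = 0\}$ enumerated as $j_0 < j_1 < \cdots$; $J_{\mathrm{fixed},1} = \{j_n : n = 4m+1, m \ge 0\}$, $J_{\mathrm{fixed},0} = \{j_n : n = 4m+3, m\ge 0\}$. Then $A_{q_k}$ is the set of $(a_j) \in \{0,1\}^\mathbb{N}$ with $a_j = 1$ if $c_j = 1$, $a_j = 1$ if $j \in J_{\mathrm{fixed},1}$, and $a_j = 0$ if $j \in J_{\mathrm{fixed},0}$ (other entries free). A gap of a compact $C\subset\mathbb{R}$ is a maximal connected component of $\mathbb{R}\setminus C$; compact $C_1,C_2$ are interleaved if neither lies in a gap of the other. $d_{\mathrm{H}}$ is the Hausdorff distance; compact $A,B$ are $\epsilon$-strongly interleaved if any compact $A',B'$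 with $d_{\mathrm{H}}(A,A')\le\epsilon$, $d_{\mathrm{H}}(B,B')\le\epsilon$ are interleaved. *)

(* Defs.v *)
From mathcomp Require Import all_boot all_order all_algebra.
From mathcomp Require Import all_classical all_reals all_analysis.
Set Implicit Arguments. Unset Strict Implicit. Unset Printing Implicit Defensive.
Import Order.TTheory GRing.Theory Num.Theory numFieldNormedType.Exports.
Local Open Scope classical_set_scope.
Local Open Scope ring_scope.

Section Defs.
Variable R : realType.

(* Digit sequences (eps_j)_{j>=1} in {0,1}^N are represented by
   e : nat -> bool with  e n = eps_{n+1}  (0-based storage). *)
Definition digits := nat -> bool.

Definition piq (q : R) (e : digits) : R :=
  limn (fun n => \sum_(i < n) (e i)%:R * q ^- i.+1).

(* S_{k-1}: no block of consecutive entries equal to 0 1^{k-1} or 1 0^{k-1} *)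
Definition Sset (k : nat) : set digits :=
  [set e | forall n : nat,
     ~ (e n = false /\ forall i, (1 <= i <= k.-1)%N -> e (n + i)%N = true) /\
     ~ (e n = true /\ forall i, (1 <= i <= k.-1)%N -> e (n + i)%N = false)].

Definition gqk (q : R) (k : nat) (x : R) : R :=
  q ^- k * x + \sum_(1 <= j < k) q ^- j.

(* (c_j)_{j>=1} = 1^k 0^oo, indexed from 1 *)
Definition cseq (k j : nat) : bool := (1 <= j <= k)%N.

(* enumeration j_0 < j_1 < ... of J = {j >= 1 : c_j = 0} = {k+1, k+2, ...} *)
Definition Jenum (k n : nat) : nat := (k + 1 + n)%N.

(* A_{q_k}: a_j = 1 if c_j = 1; a_{j_n} = 1 if n = 4m+1; a_{j_n} = 0 if n = 4m+3.
   Here a_j (j >= 1) is stored as e (j-1). *)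
Definition Aset (k : nat) : set digits :=
  [set e | (forall j, (1 <= j)%N -> cseq k j -> e j.-1 = true) /\
           (forall m, e (Jenum k (4 * m + 1)).-1 = true) /\
           (forall m, e (Jenum k (4 * m + 3)).-1 = false)].

Definition gap (C G : set R) : Prop :=
  exists2 x, ~ C x & G = connected_component (~` C) x.

Definition lies_in_gap (C1 C2 : set R) : Prop :=
  exists2 G, gap C2 G & C1 `<=` G.

Definition interleaved (C1 C2 : set R) : Prop :=
  ~ lies_in_gap C1 C2 /\ ~ lies_in_gap C2 C1.

Definition hausdorff_dist (A B : set R) : \bar R :=
  maxe (ereal_sup [set ereal_inf [set (`|a - b|)%:E | b in B] | a in A])
       (ereal_sup [set ereal_inf [set (`|a - b|)%:E | a in A] | b in B]).

Definition strongly_interleaved (eps : R) (A B : set R) : Prop :=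
  forall A' B' : set R, compact A' -> compact B' ->
    (hausdorff_dist A A' <= eps%:E)%E -> (hausdorff_dist B B' <= eps%:E)%E ->
    interleaved A' B'.

End Defs.

(* Main.v *)
Require Import Defs.
From mathcomp Require Import all_boot all_order all_algebra.
From mathcomp Require Import all_classical all_reals all_analysis.
From mathcomp Require Import ring lra zify.
Import Order.TTheory GRing.Theory Num.Theory numFieldNormedType.Exports.
Local Open Scope classical_set_scope.
Local Open Scope ring_scope.


Section Aux.
Variable R : realType.
Variable q : R.
Hypothesis q1 : 1 < q.

Definition ps (e : digits) n : R := \sum_(i < n) (e i)%:R * q ^- i.+1.

Lemma q0 : 0 < q. Proof. by apply: lt_trans q1. Qed.

Lemma ps_ub e n : ps e n <= (q - 1)^-1.
Proof.
have qn0 : q - 1 != 0 by rewrite subr_eq0 gt_eqF.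
have h : \sum_(i < n) q ^- i.+1 = (1 - q ^- n) / (q - 1).
  elim: n => [|n IH]; first by by rewrite big_ord0 expr0 invr1 subrr mul0r.
  rewrite big_ord_recr /= IH.
  apply: (mulIf qn0); rewrite mulrDl !mulfVK //.
  rewrite exprS invfM; field; rewrite ?expf_neq0 ?gt_eqF ?q0 //.
apply: (@le_trans _ _ (\sum_(i < n) q ^- i.+1)).
  apply: ler_sum => i _; case: (e i); rewrite ?mul1r ?mul0r //.
  by rewrite invr_ge0 exprn_ge0 // ltW // q0.
rewrite h -[X in _ <= X]mul1r ler_pM2r ?invr_gt0 ?subr_gt0 //.
by rewrite lerBlDr lerDl invr_ge0 exprn_ge0 // ltW // q0.
Qed.

Lemma ps_nd e : nondecreasing_seq (ps e).
Proof.
  apply/nondecreasing_seqP => n; rewrite /ps big_ord_recr /= lerDl.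
  case: (e n); rewrite ?mul1r ?mul0r //.
  by rewrite invr_ge0 exprn_ge0 // ltW // q0.
Qed.

Lemma ps_cvg e : cvgn (ps e).
Proof.
apply: nondecreasing_is_cvgn; first exact: ps_nd.
by exists (q - 1)^-1 => _ [n _ <-]; apply: ps_ub.
Qed.

Lemma piq_ps e : piq q e = limn (ps e). Proof. by []. Qed.

Lemma ps_shift e N n :
  ps e (n + N) = ps e N + q ^- N * ps (fun i => e (i + N)%N) n.
Proof.
elim: n => [|n IH]; first by rewrite /ps big_ord0 mulr0 addr0.
rewrite addSn /ps big_ord_recr /= -/(ps e (n + N)) IH.
rewrite [X in _ = _ + _ * X]big_ord_recr /= mulrDr addrA; congr (_ + _).
by rewrite mulrCA -invfM -exprD addnS addnC.
Qed.

Lemma piq_shift e N :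
  piq q e = ps e N + q ^- N * piq q (fun i => e (i + N)%N).
Proof.
have c1 := ps_cvg e; have c2 := ps_cvg (fun i => e (i + N)%N).
have h : (fun n => ps e (n + N)) @ \oo --> ps e N + q ^- N * piq q (fun i => e (i + N)%N).
  rewrite (_ : (fun n => _) = (fun n => ps e N + q ^- N * ps (fun i => e (i + N)%N) n)); last first.
    by apply: funext => n; rewrite ps_shift.
  apply: cvgD; first exact: cvg_cst.
  apply: cvgM; first exact: cvg_cst.
  exact: c2.
rewrite (cvg_shiftn N (ps e)) in h.
by rewrite /piq -/(ps e) (cvg_lim _ h).
Qed.

Lemma piq_per e p : (0 < p)%N -> (forall n, e (n + p)%N = e n) ->
  piq q e = ps e p / (1 - q ^- p).
Proof.
move=> p0 per; have := piq_shift e p.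
rewrite (_ : (fun i => e (i + p)%N) = e); last by apply: funext => n; rewrite per.
have h1 : q ^- p < 1.
  by rewrite invf_lt1 ?exprn_gt0 ?q0 // exprn_egt1 // -lt0n.
have h2 : 1 - q ^- p != 0 by rewrite subr_eq0 eq_sym lt_eqF.
move=> E; apply: (mulIf h2); rewrite mulfVK //; rewrite mulrBr mulr1 {1}E; ring.
Qed.

End Aux.
Arguments ps {R}.


Lemma not_gap (R : realType) (A B : set R) a1 a2 b :
  A a1 -> A a2 -> B b -> a1 <= b <= a2 -> ~ lies_in_gap A B.
Proof.
move=> A1 A2 Bb hb [G [x Bx ->] sub].
have /connected_intervalP iv := @component_connected R (~` B) x.
have := iv a1 a2 (sub _ A1) (sub _ A2) b hb.
by move/connected_component_sub; apply.
Qed.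

Lemma haus_near (R : realType) (A A' : set R) (eps : R) a :
  0 < eps -> (hausdorff_dist A A' <= eps%:E)%E -> A a ->
  exists2 a', A' a' & `|a - a'| < 2 * eps.
Proof.
move=> e0 hd Aa.
have h1 : (ereal_inf [set (`|a - b|)%:E | b in A'] <= eps%:E)%E.
  apply: le_trans hd; apply: le_trans (_ : _ <= ereal_sup [set ereal_inf [set (`|a0 - b|)%:E | b in A'] | a0 in A])%E _.
    by apply: ereal_sup_ubound; exists a.
  by rewrite le_max lexx.
have h2 : (ereal_inf [set (`|a - b|)%:E | b in A'] < (2 * eps)%:E)%E.
  by apply: le_lt_trans h1 _; rewrite lte_fin; lra.
have [_ [b Ab <-] hb] := ereal_inf_lt h2.
by exists b => //; rewrite -lte_fin.
Qed.


Definition e0 : digits := fun _ => false.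
Definition e1 : digits := fun _ => true.
Definition emid (k : nat) : digits := fun n => (2 * k <= n)%N && ((n - 2 * k) %% 3 == 0)%N.
Definition elo (k : nat) : digits := fun n => (n < k)%N || ((n - k) %% 4 == 1)%N.
Definition ehi (k : nat) : digits := fun n => (n < k)%N || ((n - k) %% 4 != 3)%N.

Lemma e0_S k : (2 <= k)%N -> Sset k e0.
Proof.
move=> k2 n; split; last by case.
by case=> _ /(_ 1%N); rewrite /e0 => h; have := h ltac:(lia).
Qed.

Lemma e1_S k : (2 <= k)%N -> Sset k e1.
Proof.
move=> k2 n; split; first by case.
by case=> _ /(_ 1%N); rewrite /e1 => h; have := h ltac:(lia).
Qed.

Lemma emid_S k : (4 <= k)%N -> Sset k (emid k).
Proof.
move=> k4 n; split.
  case=> _ h; have := h 1%N ltac:(lia); have := h 2%N ltac:(lia).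
  rewrite /emid => /andP [a /eqP b] /andP [c /eqP d]; lia.
case; rewrite /emid => /andP [a /eqP b] h; have := h 3%N ltac:(lia).
move=> /negbT; rewrite negb_and => /orP [] /negP; apply; [lia | apply/eqP; lia].
Qed.

Lemma elo_A k : Aset k (elo k).
Proof.
split; first by move=> j j1 /andP[_ jk]; rewrite /elo; apply/orP; left; lia.
split => m; rewrite /elo /Jenum.
  by apply/orP; right; apply/eqP; lia.
apply/negbTE; rewrite negb_or; apply/andP; split; [rewrite -leqNgt; lia | apply/eqP; lia].
Qed.

Lemma ehi_A k : Aset k (ehi k).
Proof.
split; first by move=> j j1 /andP[_ jk]; rewrite /ehi; apply/orP; left; lia.
split => m; rewrite /ehi /Jenum.
  by apply/orP; right; apply/negP => /eqP; lia.
apply/negbTE; rewrite negb_or negbK; apply/andP; split; [rewrite -leqNgt; lia | apply/eqP; lia].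
Qed.


Section Vals.
Variable R : realType.
Variable q : R.
Hypothesis q1 : 1 < q.

Lemma qn0 n : q ^+ n != 0. Proof. by rewrite expf_neq0 // gt_eqF // (@q0 _ _ q1). Qed.

Lemma geom n : \sum_(i < n) q ^- i.+1 = (1 - q ^- n) / (q - 1).
Proof.
have qm0 : q - 1 != 0 by rewrite subr_eq0 gt_eqF.
elim: n => [|n IH]; first by rewrite big_ord0 expr0 invr1 subrr mul0r.
rewrite big_ord_recr /= IH.
apply: (mulIf qm0); rewrite mulrDl !mulfVK //.
rewrite exprS invfM; field; rewrite ?expf_neq0 ?gt_eqF ?(@q0 _ _ q1) //.
Qed.

Lemma root_sum k : q ^+ k = \sum_(0 <= i < k) q ^+ i -> \sum_(i < k) q ^- i.+1 = 1.
Proof.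
move=> hk; have qm0 : q - 1 != 0 by rewrite subr_eq0 gt_eqF.
have h : q ^+ k - 1 = (q - 1) * q ^+ k by rewrite subrX1 [in RHS]hk big_mkord.
rewrite geom; apply: (mulIf qm0); rewrite mulfVK // mul1r.
apply: (mulIf (qn0 k)); rewrite mulrBl mulVf ?qn0 // mul1r h; ring.
Qed.

Lemma ps_e1 n : ps q e1 n = \sum_(i < n) q ^- i.+1.
Proof. by apply: eq_bigr => i _; rewrite /e1 mul1r. Qed.

Lemma piq_e0 : piq q e0 = 0.
Proof.
rewrite (@piq_per _ q q1 e0 1%N) //.
by rewrite /ps big_ord_recr big_ord0 /= mul0r addr0 mul0r.
Qed.

Lemma piq_e1 : piq q e1 = q^-1 / (1 - q^-1).
Proof.
rewrite (@piq_per _ q q1 e1 1%N) //.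
by rewrite /ps big_ord_recr big_ord0 /= mul1r add0r expr1.
Qed.

Lemma piq_emid k : piq q (emid k) = q ^- (2 * k) * (q^-1 / (1 - q ^- 3)).
Proof.
rewrite (@piq_shift _ q q1 (emid k) (2 * k)%N).
rewrite (_ : ps q (emid k) (2 * k) = 0); last first.
  by rewrite /ps big1 // => i _; rewrite /emid leqNgt ltn_ord /= mul0r.
rewrite add0r (_ : (fun i => _) = (fun n => (n %% 3 == 0)%N)); last first.
  by apply: funext => n; rewrite /emid leq_addl addnK.
rewrite (@piq_per _ q q1 _ 3%N) //; last by move=> n; rewrite modnDr.
by rewrite /ps !big_ord_recr big_ord0 /= !mul0r !mul1r !addr0 add0r expr1.
Qed.

Lemma piq_elo k : q ^+ k = \sum_(0 <= i < k) q ^+ i ->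
  piq q (elo k) = 1 + q ^- k * (q ^- 2 / (1 - q ^- 4)).
Proof.
move=> hk; rewrite (@piq_shift _ q q1 (elo k) k).
rewrite (_ : ps q (elo k) k = 1); last first.
  rewrite -(@root_sum k hk); apply: eq_bigr => i _; by rewrite /elo ltn_ord mul1r.
rewrite (_ : (fun i => _) = (fun n => (n %% 4 == 1)%N)); last first.
  by apply: funext => n; rewrite /elo ltnNge leq_addl addnK.
rewrite (@piq_per _ q q1 _ 4%N) //; last by move=> n; rewrite modnDr.
by rewrite /ps !big_ord_recr big_ord0 /= !mul0r !mul1r !addr0 !add0r.
Qed.

Lemma piq_ehi k : q ^+ k = \sum_(0 <= i < k) q ^+ i ->
  piq q (ehi k) = 1 + q ^- k * ((q ^- 1 + q ^- 2 + q ^- 3) / (1 - q ^- 4)).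
Proof.
move=> hk; rewrite (@piq_shift _ q q1 (ehi k) k).
rewrite (_ : ps q (ehi k) k = 1); last first.
  rewrite -(@root_sum k hk); apply: eq_bigr => i _; by rewrite /ehi ltn_ord mul1r.
rewrite (_ : (fun i => _) = (fun n => (n %% 4 != 3)%N)); last first.
  by apply: funext => n; rewrite /ehi ltnNge leq_addl addnK.
rewrite (@piq_per _ q q1 _ 4%N) //; last by move=> n; rewrite modnDr.
by rewrite /ps !big_ord_recr big_ord0 /= !mul0r !mul1r !addr0 !add0r expr1.
Qed.

Lemma gqk_val k x : q ^+ k = \sum_(0 <= i < k) q ^+ i -> (0 < k)%N ->
  gqk q k x = q ^- k * x + 1 - q ^- k.
Proof.
move=> hk k0; rewrite /gqk -(@root_sum k hk).
case: k hk k0 => [|k'] // hk _.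
rewrite big_ord_recr /= big_add1 /= big_mkord; ring.
Qed.

End Vals.


Lemma powle (R : realFieldType) n (x y : R) : 0 <= x -> x <= y -> x ^+ n <= y ^+ n.
Proof. by move=> x0 xy; apply: lerXn2r => //; rewrite nnegrE //; exact: le_trans xy. Qed.

Lemma numeric (R : realFieldType) (u : R) : 1/2 < u -> u <= 25/49 ->
  u ^+ 2 / (1 - u ^+ 4) <= 2/7 /\ 4/7 <= u / (1 - u ^+ 3) /\
      u / (1 - u ^+ 3) <= 3/5 /\
      14/15 <= (u + u ^+ 2 + u ^+ 3) / (1 - u ^+ 4) /\
      (u + u ^+ 2 + u ^+ 3) / (1 - u ^+ 4) <= 1 /\
      4 * u ^+ 4 <= 3/11 /\ 1 <= u / (1 - u).
Proof.
move=> hu1 hu2.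
have l2 := @powle R 2 (1/2) u ltac:(lra) ltac:(lra).
have l3 := @powle R 3 (1/2) u ltac:(lra) ltac:(lra).
have l4 := @powle R 4 (1/2) u ltac:(lra) ltac:(lra).
have m2 := @powle R 2 u (25/49) ltac:(lra) ltac:(lra).
have m3 := @powle R 3 u (25/49) ltac:(lra) ltac:(lra).
have m4 := @powle R 4 u (25/49) ltac:(lra) ltac:(lra).
have d4 : 0 < 1 - u ^+ 4 by lra.
have d3 : 0 < 1 - u ^+ 3 by lra.
have d1 : 0 < 1 - u by lra.
split; first by rewrite ler_pdivrMr //; lra.
split; first by rewrite ler_pdivlMr //; lra.
split; first by rewrite ler_pdivrMr //; lra.
split; first by rewrite ler_pdivlMr //; lra.
split; first by rewrite ler_pdivrMr //; lra.
split; first lra.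
by rewrite ler_pdivlMr //; lra.
Qed.

Lemma final_arith (R : realFieldType) (s u Tlo Tm Thi T1 p4 a1 a2 a3 b1 b2 : R) :
  0 < s -> s <= u -> 0 < u -> u <= 25/49 ->
  Tlo <= 2/7 -> 4/7 <= Tm -> Tm <= 3/5 -> 14/15 <= Thi ->
  Thi <= 1 -> 4 * p4 <= 3/11 -> 1 <= T1 -> 0 <= p4 ->
  a1 < 0 + 1 + 2 * (s * s * p4) ->
  T1 + 1 - 2 * (s * s * p4) < a2 ->
  s * s * Tm + 1 - 2 * (s * s * p4) < a3 ->
  a3 < s * s * Tm + 1 + 2 * (s * s * p4) ->
  b1 < s * (1 + s * Tlo) + 1 - s + 2 * (s * s * p4) ->
  s * (1 + s * Thi) + 1 - s - 2 * (s * s * p4) < b2 ->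
  b2 < s * (1 + s * Thi) + 1 - s + 2 * (s * s * p4) ->
  (a1 <= b2 <= a2) /\ (b1 <= a3 <= b2).
Proof.
move=> s0 s1 u0 u1 N1 N2 N3 N4 N5 N6 N7 p0.
have r0 : 0 <= s * s by rewrite mulr_ge0 // ltW.
have rl : s * s <= 1/2.
  have : s * s <= u * u by apply: ler_pM => //; apply: ltW.
  have : u * u <= 25/49 * u by apply: ler_wpM2r; lra.
  lra.
have F1 : s * s * (4 * p4) <= s * s * Thi by apply: ler_wpM2l => //; lra.
have F2 : s * s * (Thi + 4 * p4) <= 1/2 * (Thi + 4 * p4) by apply: ler_wpM2r => //; lra.
have F3 : s * s * (Tlo + 4 * p4) <= s * s * Tm by apply: ler_wpM2l => //; lra.
have F4 : s * s * (Tm + 4 * p4) <= s * s * Thi by apply: ler_wpM2l => //; lra.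
rewrite !mulrDr in F2 F3 F4.
have E T : s * (1 + s * T) + 1 - s = 1 + s * s * T by ring.
rewrite !E.
have e1 : s * s * (4 * p4) = 4 * (s * s * p4) by ring.
rewrite e1 in F1 F2 F3 F4.
move: F1 F2 F3 F4.
set r := s * s; set e := r * p4; set x1 := r * Thi; set x2 := r * Tlo; set x3 := r * Tm.
move=> F1 F2 F3 F4.
clearbody r e x1 x2 x3.
clear E e1.
move=> a1r a2l a3l a3r b1r b2l b2r.
split; apply/andP; split; lra.
Qed.


Lemma u_bounds (R : realType) (k : nat) (q : R) :
  (9 <= k)%N -> 1 < q -> q < 2 -> q ^+ k = \sum_(0 <= i < k) q ^+ i ->
  1/2 < q^-1 /\ q^-1 <= 25/49.
Proof.
move=> k9 q1 q2 hk.
have qpos := @q0 R q q1.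
have S1 := @root_sum R q q1 k hk.
have := @ps_nd R q q1 e1 9 k k9.
rewrite (@ps_e1 R q 9) (@ps_e1 R q k) S1 !big_ord_recr big_ord0 /= -!exprVn.
have qu : q * q^-1 = 1 by rewrite mulfV // gt_eqF.
have u0 : 0 < q^-1 by rewrite invr_gt0.
move: qu u0; set u := q^-1; clearbody u => qu u0 hs.
split; first nra.
rewrite leNgt; apply/negP => hc.
have l1 := @powle R 1 (25/49) u ltac:(lra) (ltW hc).
have l2 := @powle R 2 (25/49) u ltac:(lra) (ltW hc).
have l3 := @powle R 3 (25/49) u ltac:(lra) (ltW hc).
have l4 := @powle R 4 (25/49) u ltac:(lra) (ltW hc).
have l5 := @powle R 5 (25/49) u ltac:(lra) (ltW hc).
have l6 := @powle R 6 (25/49) u ltac:(lra) (ltW hc).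
have l7 := @powle R 7 (25/49) u ltac:(lra) (ltW hc).
have l8 := @powle R 8 (25/49) u ltac:(lra) (ltW hc).
have l9 := @powle R 9 (25/49) u ltac:(lra) (ltW hc).
clear qu hk S1 q1 q2 qpos.
lra.
Qed.

Theorem lemma4p5 (R : realType) (k : nat) (q : R) :
  (9 <= k)%N -> 1 < q < 2 -> q ^+ k = \sum_(0 <= i < k) q ^+ i ->
  strongly_interleaved (q ^- (2 * k + 4))
    [set x + 1 | x in piq q @` Sset k]
    (gqk q k @` (piq q @` Aset k)).
Proof.
move=> k9 /andP[q1 q2] hk A' B' _ _ hA hB.
have k2 : (2 <= k)%N by apply: leq_trans k9.
have k4 : (4 <= k)%N by apply: leq_trans k9.
have k0 : (0 < k)%N by apply: leq_trans k9.
have qpos := @q0 R q q1.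
have [hu1 hu2] := @u_bounds R k q k9 q1 q2 hk.
have [N1 [N2 [N3 [N4 [N5 [N6 N7]]]]]] := @numeric R _ hu1 hu2.
set X := [set x + 1 | x in piq q @` Sset k].
set Y := gqk q k @` (piq q @` Aset k).
have hX e : Sset k e -> X (piq q e + 1) by move=> He; exists (piq q e) => //; exists e.
have hY e : Aset k e -> Y (gqk q k (piq q e)) by move=> He; exists (piq q e) => //; exists e.
have ep : 0 < q ^- (2 * k + 4) by rewrite invr_gt0 exprn_gt0.
have [a1 Aa1 ha1] := @haus_near R X A' (q ^- (2 * k + 4)) _ ep hA (hX e0 (@e0_S k k2)).
have [a2 Aa2 ha2] := @haus_near R X A' (q ^- (2 * k + 4)) _ ep hA (hX _ (@e1_S k k2)).
have [a3 Aa3 ha3] := @haus_near R X A' (q ^- (2 * k + 4)) _ ep hA (hX _ (@emid_S k k4)).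
have [b1 Bb1 hb1] := @haus_near R Y B' (q ^- (2 * k + 4)) _ ep hB (hY _ (elo_A k)).
have [b2 Bb2 hb2] := @haus_near R Y B' (q ^- (2 * k + 4)) _ ep hB (hY _ (ehi_A k)).
clear hA hB hX hY.
move: ha1 ha2 ha3 hb1 hb2.
rewrite (@piq_e0 R q q1) (@piq_e1 R q q1) (@piq_emid R q q1 k).
rewrite !(@gqk_val R q q1 k _ hk k0) (@piq_elo R q q1 k hk) (@piq_ehi R q q1 k hk).
rewrite -!exprVn expr1 exprD.
have r2 : q^-1 ^+ (2 * k) = q^-1 ^+ k * q^-1 ^+ k by rewrite mul2n -addnn exprD.
rewrite r2.
have u0 : 0 < q^-1 by rewrite invr_gt0.
have s1 : q^-1 ^+ k <= q^-1.
  rewrite (_ : k = (k.-1).+1); last by rewrite prednK.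
  rewrite exprS ler_piMr // ?exprn_ge0 ?exprn_ile1 // ?ltW //.
  by rewrite invf_lt1.
have s0 : 0 < q^-1 ^+ k by rewrite exprn_gt0.
have p0 : 0 <= q^-1 ^+ 4 by rewrite exprn_ge0 // ltW.
move: N1 N2 N3 N4 N5 N6 N7 s1 s0 p0 u0 hu2.
set u := q^-1; set s := u ^+ k.
set Tlo := u ^+ 2 / (1 - u ^+ 4).
set Tm := u / (1 - u ^+ 3).
set Thi := (u + u ^+ 2 + u ^+ 3) / (1 - u ^+ 4).
set T1 := u / (1 - u).
set p4 := u ^+ 4.
move=> N1 N2 N3 N4 N5 N6 N7 s1 s0 p0 u0 hu2.
rewrite !ltr_distlC => /andP[a1l a1r] /andP[a2l a2r] /andP[a3l a3r] /andP[b1l b1r] /andP[b2l b2r].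
have [H1 H2] := @final_arith R s u Tlo Tm Thi T1 p4 a1 a2 a3 b1 b2 s0 s1 u0 hu2
  N1 N2 N3 N4 N5 N6 N7 p0 a1r a2l a3l a3r b1r b2l b2r.
split.
  exact: (@not_gap R _ _ _ _ _ Aa1 Aa2 Bb2 H1).
exact: (@not_gap R _ _ _ _ _ Bb1 Bb2 Aa3 H2).
Qed.
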